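(* Let $\mathcal H,\mathcal L$ be Hilbert spaces, $\mathcal A=\bigcup_i\mathcal A_i\subset\mathcal H$ a closed proximal union of linear subspaces, and $\Phi:\mathcal H\to\mathcal L$ a bounded linear operator that is bi-Lipschitz on $\mathcal A$ with constants $0<\alpha\le\beta$. Let $\mu>0$ satisfy $\beta\le 1/\mu<1.5\,\alpha$ and $\mu\alpha<1$. Let $x\in\mathcal H$ be arbitrary, $e\in\mathcal L$, $y=\Phi x+e$, $x_{\mathcal A}\in p_{\mathcal A}(x)$, and $e_{\mathcal A}=y-\Phi x_{\mathcal A}=\Phi(x-x_{\mathcal A})+e$. Consider the Iterative Projection Algorithm: $x^0=0$ and $x^{n+1}\in p_{\mathcal A}\big(x^n+\mu\Phi^*(y-\Phi x^n)\big)$ (any choice of element). Assume $x_{\mathcal A}\neq0$, $e_{\mathcal A}\ne0$, and let $\delta>0$ with $\delta\|e_{\mathcal A}\|<\|x_{\mathcal A}\|$. Then after $$n^\star=\left\lceil 2\,\frac{\ln\!\big(\delta\|e_{\mathcal A}\|/\|x_{\mathcal A}\|\big)}{\ln\!\big(2/(\mu\alpha)-2\big)}\right\rceil$$ iterations, $$\|x-x^{n^\star}\|\le\big(c^{1/2}+\delta\big)\|e_{\mathcal A}\|+\|x_{\mathcal A}-x\|,\qquad c=\frac{4}{3\alpha-2/\mu}.$$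
   Context: $\Phi^*$ is the adjoint of $\Phi$. A set $\mathcal B$ is proximal if for every $w$ the set $p_{\mathcal B}(w)=\{\tilde w\in\mathcal B:\|\tilde w-w\|=\inf_{\hat w\in\mathcal B}\|\hat w-w\|\}$ is nonempty. $\Phi$ is bi-Lipschitz on $\mathcal A$ with constants $0<\alpha\le\beta$ if for all $x_1,x_2\in\mathcal A$: $\alpha\|x_1-x_2\|^2\le\|\Phi(x_1-x_2)\|^2\le\beta\|x_1-x_2\|^2$. *)

(* Defs.v *)
From Stdlib Require Import Reals ZArith.
Open Scope R_scope.

Record Hilbert := {
  hcar :> Type;
  hzero : hcar;
  hadd : hcar -> hcar -> hcar;
  hopp : hcar -> hcar;
  hscal : R -> hcar -> hcar;
  hinner : hcar -> hcar -> R;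
  haddA : forall x y z, hadd x (hadd y z) = hadd (hadd x y) z;
  haddC : forall x y, hadd x y = hadd y x;
  hadd0 : forall x, hadd x hzero = x;
  haddN : forall x, hadd x (hopp x) = hzero;
  hscalA : forall a b x, hscal a (hscal b x) = hscal (a * b) x;
  hscal1 : forall x, hscal 1 x = x;
  hscalDr : forall a x y, hscal a (hadd x y) = hadd (hscal a x) (hscal a y);
  hscalDl : forall a b x, hscal (a + b) x = hadd (hscal a x) (hscal b x);
  hinner_sym : forall x y, hinner x y = hinner y x;
  hinner_addl : forall x y z, hinner (hadd x y) z = hinner x z + hinner y z;
  hinner_scall : forall a x y, hinner (hscal a x) y = a * hinner x y;
  hinner_pos : forall x, 0 <= hinner x x;
  hinner_def : forall x, hinner x x = 0 -> x = hzero;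
  hcomplete : forall u : nat -> hcar,
    (forall eps, 0 < eps -> exists N, forall m n, (N <= m)%nat -> (N <= n)%nat ->
        sqrt (hinner (hadd (u m) (hopp (u n))) (hadd (u m) (hopp (u n)))) < eps) ->
    exists l, forall eps, 0 < eps -> exists N, forall n, (N <= n)%nat ->
        sqrt (hinner (hadd (u n) (hopp l)) (hadd (u n) (hopp l))) < eps
}.

Arguments hzero {h}.
Arguments hadd {h}.
Arguments hopp {h}.
Arguments hscal {h}.
Arguments hinner {h}.

Definition hsub {H : Hilbert} (x y : H) : H := hadd x (hopp y).
Definition hnorm {H : Hilbert} (x : H) : R := sqrt (hinner x x).

Definition hconv {H : Hilbert} (u : nat -> H) (l : H) : Prop :=
  forall eps, 0 < eps -> exists N, forall n, (N <= n)%nat -> hnorm (hsub (u n) l) < eps.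

Definition hclosed {H : Hilbert} (S : H -> Prop) : Prop :=
  forall (u : nat -> H) (l : H), (forall n, S (u n)) -> hconv u l -> S l.

Definition subspace {H : Hilbert} (S : H -> Prop) : Prop :=
  S hzero /\ (forall x y, S x -> S y -> S (hadd x y)) /\
  (forall a x, S x -> S (hscal a x)).

Definition union_fam {H : Hilbert} {I : Type} (Ai : I -> H -> Prop) : H -> Prop :=
  fun x => exists i, Ai i x.

(* p_B(w) as a predicate: the set of best approximations of w in B *)
Definition proj_set {H : Hilbert} (B : H -> Prop) (w : H) : H -> Prop :=
  fun v => B v /\ forall b, B b -> hnorm (hsub v w) <= hnorm (hsub b w).

Definition proximal {H : Hilbert} (B : H -> Prop) : Prop :=
  forall w, exists v, proj_set B w v.

Definition bounded_linear {H L : Hilbert} (Phi : H -> L) : Prop :=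
  (forall x y, Phi (hadd x y) = hadd (Phi x) (Phi y)) /\
  (forall a x, Phi (hscal a x) = hscal a (Phi x)) /\
  (exists K, forall x, hnorm (Phi x) <= K * hnorm x).

Definition is_adjoint {H L : Hilbert} (Phi : H -> L) (Phis : L -> H) : Prop :=
  forall x w, hinner (Phi x) w = hinner x (Phis w).

Definition bi_lipschitz {H L : Hilbert} (Phi : H -> L) (A : H -> Prop)
  (alpha beta : R) : Prop :=
  0 < alpha /\ alpha <= beta /\
  forall x1 x2, A x1 -> A x2 ->
    alpha * (hnorm (hsub x1 x2))^2 <= (hnorm (Phi (hsub x1 x2)))^2 /\
    (hnorm (Phi (hsub x1 x2)))^2 <= beta * (hnorm (hsub x1 x2))^2.

(* ceiling of a real number: - floor(-r), with Int_part = floor *)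
Definition Rceil (r : R) : Z := (- Int_part (- r))%Z.

Definition IPA_seq {H L : Hilbert} (A : H -> Prop) (Phi : H -> L) (Phis : L -> H)
  (mu : R) (y : L) (xs : nat -> H) : Prop :=
  xs 0%nat = hzero /\
  forall n, proj_set A (hadd (xs n) (hscal mu (Phis (hsub y (Phi (xs n)))))) (xs (S n)).

(* Main.v *)
Require Import Defs.
From Stdlib Require Import Reals ZArith Lra Lia.
Open Scope R_scope.

Ltac canon :=
  repeat match goal with
  | |- context [@hinner ?h ?a ?b] =>
      match goal with
      | |- context [@hinner h b a] =>
          lazymatch a with b => fail | _ => rewrite (hinner_sym h b a) end
      end
  end.


Section HL.
Variable H : Hilbert.
Implicit Types x y z : H.

Lemma add0l x : hadd hzero x = x.
Proof. rewrite haddC; apply hadd0. Qed.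

Lemma scal0 x : hscal 0 x = hzero.
Proof.
  set (s := hscal 0 x).
  assert (E : hadd s s = s) by (unfold s; rewrite <- hscalDl; f_equal; ring).
  rewrite <- (haddN _ s). rewrite <- E at 2. rewrite <- haddA, haddN, hadd0. reflexivity.
Qed.

Lemma opp_scal x : hopp x = hscal (-1) x.
Proof.
  set (h := hscal (-1) x).
  assert (E : hadd x h = hzero).
  { unfold h. rewrite <- (hscal1 _ x) at 1. rewrite <- hscalDl.
    replace (1 + -1) with 0 by ring. apply scal0. }
  rewrite <- (hadd0 _ h). rewrite <- (haddN _ x). rewrite haddA.
  rewrite (haddC _ h x), E, add0l. reflexivity.
Qed.

Lemma inner_addr x y z : hinner x (hadd y z) = hinner x y + hinner x z.
Proof. rewrite hinner_sym, hinner_addl, (hinner_sym _ y), (hinner_sym _ z). reflexivity. Qed.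
Lemma inner_scalr a x y : hinner x (hscal a y) = a * hinner x y.
Proof. rewrite hinner_sym, hinner_scall, hinner_sym. reflexivity. Qed.
Lemma inner_oppl x y : hinner (hopp x) y = - hinner x y.
Proof. rewrite opp_scal, hinner_scall. ring. Qed.
Lemma inner_oppr x y : hinner x (hopp y) = - hinner x y.
Proof. rewrite opp_scal, inner_scalr. ring. Qed.
Lemma inner_0l y : hinner hzero y = 0.
Proof. rewrite <- (scal0 hzero), hinner_scall. ring. Qed.
Lemma inner_0r y : hinner y hzero = 0.
Proof. rewrite hinner_sym; apply inner_0l. Qed.

Lemma norm_sq x : hnorm x ^ 2 = hinner x x.
Proof. unfold hnorm. apply pow2_sqrt, hinner_pos. Qed.
Lemma norm_pos x : 0 <= hnorm x.
Proof. apply sqrt_pos. Qed.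

Lemma CS x y : hinner x y <= hnorm x * hnorm y.
Proof.
  destruct (Req_dec (hinner y y) 0) as [E|E].
  - apply hinner_def in E. subst y. rewrite inner_0r.
    apply Rmult_le_pos; apply norm_pos.
  - assert (Py : 0 < hinner y y) by (pose proof (hinner_pos _ y); lra).
    set (v := hadd (hscal (hinner y y) x) (hopp (hscal (hinner x y) y))).
    pose proof (hinner_pos _ v) as P.
    unfold v in P. rewrite hinner_addl, !inner_addr, !inner_oppl, !inner_oppr,
      !hinner_scall, !inner_scalr, (hinner_sym _ y x) in P.
    assert (Q : (hinner x y)^2 <= hinner x x * hinner y y) by nra.
    assert (Hxy : (hinner x y)^2 <= (hnorm x * hnorm y)^2).
    { rewrite Rpow_mult_distr, !norm_sq. exact Q. }
    destruct (Rle_dec (hinner x y) 0). 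
    + pose proof (norm_pos x); pose proof (norm_pos y). nra.
    + apply Rsqr_incr_0_var.
      * unfold Rsqr; simpl in Hxy; nra.
      * apply Rmult_le_pos; apply norm_pos.
Qed.

Lemma tri (a b c : H) : hnorm (hsub a c) <= hnorm (hsub a b) + hnorm (hsub b c).
Proof.
  assert (E : hinner (hsub a c) (hsub a c) =
     hinner (hsub a b) (hsub a b) + 2 * hinner (hsub a b) (hsub b c) + hinner (hsub b c) (hsub b c)).
  { unfold hsub. rewrite !hinner_addl, !inner_addr, !inner_oppl, !inner_oppr.
    canon. ring. }
  pose proof (CS (hsub a b) (hsub b c)).
  pose proof (norm_pos (hsub a b)); pose proof (norm_pos (hsub b c)).
  apply Rsqr_incr_0_var; [| nra].
  unfold Rsqr.
  assert (hnorm (hsub a c) * hnorm (hsub a c) = hinner (hsub a c) (hsub a c)) by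
    (rewrite <- norm_sq; ring).
  assert (hnorm (hsub a b) * hnorm (hsub a b) = hinner (hsub a b) (hsub a b)) by
    (rewrite <- norm_sq; ring).
  assert (hnorm (hsub b c) * hnorm (hsub b c) = hinner (hsub b c) (hsub b c)) by
    (rewrite <- norm_sq; ring).
  nra.
Qed.

Lemma norm_subC (a b : H) : hnorm (hsub a b) = hnorm (hsub b a).
Proof.
  unfold hnorm. f_equal. unfold hsub.
  rewrite !hinner_addl, !inner_addr, !inner_oppl, !inner_oppr. canon. ring.
Qed.

Lemma quad (v u w : H) t :
  hinner (hsub v (hadd u (hscal t w))) (hsub v (hadd u (hscal t w))) =
  hinner (hsub v u) (hsub v u) - 2 * t * hinner (hsub v u) w + t * t * hinner w w.
Proof.
  unfold hsub. rewrite !opp_scal, !hscalDr, !hscalA.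
  rewrite !hinner_addl, !inner_addr, !hinner_scall, !inner_scalr. canon. ring.
Qed.

End HL.

Lemma step_real (al be mu aa ad ae dd de ee N1 N2 N3 : R) :
  0 < al -> 0 < mu -> be <= 1/mu -> 0 <= N1 ->
  N1 - 2*mu*(ad+de) <= N2 - 2*mu*(aa+ae) ->
  dd <= be * N1 -> al * N2 <= aa -> al * N3 <= aa - 2*ad + dd ->
  0 <= aa+dd+4*ee - 2*ad + 4*ae - 4*de ->
  N3 <= (2/(mu*al) - 2) * N2 + 4/al * ee.
Proof.
  intros Hal Hmu Hbe HN1 H1 H2 H3 H4 H5.
  set (m := 1/mu).
  assert (Hm : mu * m = 1) by (unfold m; field; lra).
  assert (Hm0 : 0 < m) by (unfold m; apply Rdiv_lt_0_compat; lra).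
  assert (I1 : m*N1 - 2*(ad+de) <= m*N2 - 2*(aa+ae)).
  { assert (m*(N1 - 2*mu*(ad+de)) <= m*(N2 - 2*mu*(aa+ae))) by (apply Rmult_le_compat_l; lra).
    assert (E1 : m*(N1 - 2*mu*(ad+de)) = m*N1 - 2*(mu*m)*(ad+de)) by ring.
    assert (E2 : m*(N2 - 2*mu*(aa+ae)) = m*N2 - 2*(mu*m)*(aa+ae)) by ring.
    rewrite Hm in E1, E2. lra. }
  assert (I2 : dd <= m * N1) by (fold m in Hbe; nra).
  assert (I3 : al * N3 <= 4*ee + 2*m*N2 - 2*al*N2) by lra.
  replace ((2/(mu*al) - 2) * N2 + 4/al * ee) with ((4*ee + 2*m*N2 - 2*al*N2)/al)
    by (unfold m; field; lra).
  apply Rmult_le_reg_l with al; auto.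
  replace (al * ((4*ee + 2*m*N2 - 2*al*N2)/al)) with (4*ee + 2*m*N2 - 2*al*N2) by (field; lra).
  exact I3.
Qed.

Theorem theorem2 (H L : Hilbert) (I : Type) (Ai : I -> H -> Prop)
  (Phi : H -> L) (Phis : L -> H) (alpha beta mu delta : R)
  (x : H) (e : L) (xA : H) (xs : nat -> H) :
  (forall i, subspace (Ai i)) ->
  hclosed (union_fam Ai) ->
  proximal (union_fam Ai) ->
  bounded_linear Phi ->
  is_adjoint Phi Phis ->
  bi_lipschitz Phi (union_fam Ai) alpha beta ->
  0 < mu -> beta <= 1 / mu -> 1 / mu < 3 / 2 * alpha -> mu * alpha < 1 ->
  proj_set (union_fam Ai) x xA ->
  IPA_seq (union_fam Ai) Phi Phis mu (hadd (Phi x) e) xs ->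
  let y := hadd (Phi x) e in
  let eA := hsub y (Phi xA) in
  xA <> hzero -> eA <> hzero ->
  0 < delta -> delta * hnorm eA < hnorm xA ->
  let nstar := Z.to_nat (Rceil (2 * ln (delta * hnorm eA / hnorm xA)
                                  / ln (2 / (mu * alpha) - 2))) in
  let c := 4 / (3 * alpha - 2 / mu) in
  hnorm (hsub x (xs nstar)) <= (sqrt c + delta) * hnorm eA + hnorm (hsub xA x).
Proof.
  intros Hsub Hcl Hprox Hlin Hadj Hbl Hmu Hbe Hmu2 Hma HxA Hipa y eA HxA0 HeA0 Hdel Hdel2 nstar c.
  destruct Hlin as [HPa [HPs _]].
  assert (HPn : forall z, Phi (hopp z) = hopp (Phi z)).
  { intro z. rewrite !opp_scal, HPs. reflexivity. }
  destruct Hbl as [Hal [Hab HBL]].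
  assert (A0 : union_fam Ai hzero).
  { destruct (Hprox hzero) as [v [[i _] _]]. exists i. apply Hsub. }
  destruct Hipa as [Hx0 Hit].
  assert (Amem : forall n, union_fam Ai (xs n)).
  { intro n; destruct n. rewrite Hx0; exact A0. apply (Hit n). }
  set (k := 2 / (mu * alpha) - 2).
  set (ee := hinner eA eA).
  set (R := fun n => hinner (hsub xA (xs n)) (hsub xA (xs n))).
  assert (Step : forall n, R (S n) <= k * R n + 4 / alpha * ee).
  { intro n. unfold R.
    destruct (Hit n) as [_ Hp]. specialize (Hp xA (proj1 HxA)).
    unfold hnorm in Hp. apply sqrt_le_0 in Hp; try apply hinner_pos.
    rewrite !quad in Hp. rewrite <- !Hadj in Hp.
    set (u := xs n) in *. set (v := xs (S n)) in *.
    set (a := Phi (hsub xA u)). set (d := Phi (hsub v u)).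
    assert (Ez1 : hinner d (hsub (hadd (Phi x) e) (Phi u)) = hinner a d + hinner d eA).
    { unfold a, d, eA, y, hsub. rewrite ?HPa, ?HPn, ?HPs.
      rewrite ?hinner_addl, ?inner_addr, ?inner_oppl, ?inner_oppr. canon. ring. }
    assert (Ez2 : hinner a (hsub (hadd (Phi x) e) (Phi u)) = hinner a a + hinner a eA).
    { unfold a, d, eA, y, hsub. rewrite ?HPa, ?HPn, ?HPs.
      rewrite ?hinner_addl, ?inner_addr, ?inner_oppl, ?inner_oppr. canon. ring. }
    fold d a in Hp. rewrite Ez1, Ez2 in Hp.
    assert (E3 : hinner (Phi (hsub xA v)) (Phi (hsub xA v)) = hinner a a - 2 * hinner a d + hinner d d).
    { unfold a, d, hsub. rewrite ?HPa, ?HPn, ?HPs.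
      rewrite ?hinner_addl, ?inner_addr, ?inner_oppl, ?inner_oppr. canon. ring. }
    assert (E5 : hinner (hadd (hsub a d) (hscal 2 eA)) (hadd (hsub a d) (hscal 2 eA)) =
       hinner a a + hinner d d + 4 * ee - 2 * hinner a d + 4 * hinner a eA - 4 * hinner d eA).
    { unfold ee, hsub.
      rewrite ?hinner_addl, ?inner_addr, ?inner_oppl, ?inner_oppr, ?hinner_scall, ?inner_scalr. canon. ring. }
    pose proof (hinner_pos _ (hadd (hsub a d) (hscal 2 eA))) as P5. rewrite E5 in P5.
    destruct (HBL v u (Amem _) (Amem _)) as [_ B2].
    destruct (HBL xA u (proj1 HxA) (Amem _)) as [B3 _].
    destruct (HBL xA v (proj1 HxA) (Amem _)) as [B4 _].
    rewrite !norm_sq in B2, B3, B4. rewrite E3 in B4. fold a d in B2, B3.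
    apply (step_real alpha beta mu (hinner a a) (hinner a d) (hinner a eA) (hinner d d) (hinner d eA) ee (hinner (hsub v u) (hsub v u)) _ _ Hal Hmu Hbe (hinner_pos _ _)); try assumption.
    lra. }
  assert (Hk0 : 0 < k).
  { unfold k. assert (2 < 2 / (mu*alpha)). { apply Rmult_lt_reg_r with (mu*alpha). nra.
      field_simplify; nra. } lra. }
  assert (Hk1 : k < 1).
  { unfold k. assert (2 / (mu*alpha) < 3). { apply Rmult_lt_reg_r with (mu*alpha). nra.
      field_simplify. 2: nra.
      assert (mu * (1/mu) = 1) by (field; lra). nra. } lra. }
  assert (Hden : 0 < 3 * alpha - 2 / mu).
  { assert (2/mu = 2 * (1/mu)) by (field; lra). lra. }
  assert (Hc : 0 < c) by (unfold c; apply Rdiv_lt_0_compat; lra).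
  assert (Hkc : k * c + 4 / alpha = c).
  { unfold k, c. field. split; [|split]; try lra.
    intro Z. assert (3 * alpha - 2 / mu = 0). { field_simplify; [|lra]. rewrite Z. field. lra. }
    lra. }
  assert (Hee : 0 <= ee) by apply hinner_pos.
  assert (Bound : forall n, R n <= k ^ n * R 0%nat + c * ee).
  { induction n as [|n IH].
    - simpl. pose proof (Rmult_le_pos _ _ (Rlt_le _ _ Hc) Hee). lra.
    - pose proof (Step n). simpl.
      assert (k * R n <= k * (k ^ n * R 0%nat + c * ee)) by (apply Rmult_le_compat_l; lra).
      assert (k * (k ^ n * R 0%nat + c * ee) + 4/alpha*ee = k * (k ^ n * R 0%nat) + (k*c + 4/alpha) * ee) by ring.
      match goal with Hq : _ = _ |- _ => rewrite Hkc in Hq end. lra. }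
  assert (R0 : R 0%nat = hinner xA xA).
  { unfold R. rewrite Hx0. unfold hsub.
    rewrite ?hinner_addl, ?inner_addr, ?inner_oppl, ?inner_oppr, ?inner_0l, ?inner_0r. ring. }
  assert (HnxA : 0 < hnorm xA).
  { unfold hnorm. apply sqrt_lt_R0. pose proof (hinner_pos _ xA).
    destruct (Req_dec (hinner xA xA) 0) as [Z|Z]; [apply hinner_def in Z; contradiction | lra]. }
  assert (HneA : 0 < hnorm eA).
  { unfold hnorm. apply sqrt_lt_R0. pose proof (hinner_pos _ eA).
    destruct (Req_dec (hinner eA eA) 0) as [Z|Z]; [apply hinner_def in Z; contradiction | lra]. }
  set (q := delta * hnorm eA / hnorm xA).
  assert (Hq0 : 0 < q) by (unfold q; apply Rdiv_lt_0_compat; nra).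
  assert (Hq1 : q < 1).
  { unfold q. apply Rmult_lt_reg_r with (hnorm xA); auto. field_simplify; lra. }
  assert (Hlq : ln q < 0) by (rewrite <- ln_1; apply ln_increasing; lra).
  assert (Hlk : ln k < 0) by (rewrite <- ln_1; apply ln_increasing; lra).
  set (t := 2 * ln q / ln k).
  assert (Ht : 0 < t).
  { unfold t. unfold Rdiv. pose proof (Rinv_lt_0_compat _ Hlk). nra. }
  assert (Hn : t <= INR nstar).
  { unfold nstar. fold q k t. unfold Rceil.
    destruct (base_Int_part (-t)) as [B1 _].
    assert (Hz : t <= IZR (- Int_part (- t))) by (rewrite opp_IZR; lra).
    assert (Hz0 : (0 <= - Int_part (- t))%Z) by (apply le_IZR; lra).
    rewrite INR_IZR_INZ, Z2Nat.id by exact Hz0. exact Hz. }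
  assert (Hkn : k ^ nstar <= q ^ 2).
  { rewrite <- (exp_ln (k ^ nstar)) by (apply pow_lt; lra).
    rewrite ln_pow by lra.
    assert (INR nstar * ln k <= t * ln k) by nra.
    assert (Et : t * ln k = ln q + ln q) by (unfold t; field; lra).
    rewrite Et in H0.
    assert (Eq : q ^ 2 = exp (ln q + ln q)) by (rewrite exp_plus, exp_ln by lra; ring).
    rewrite Eq. destruct (Rle_lt_or_eq_dec _ _ H0) as [Hl|Hl].
    - left. apply exp_increasing; exact Hl.
    - rewrite Hl; lra. }
  assert (HR : R nstar <= (delta ^ 2 + c) * ee).
  { pose proof (Bound nstar). rewrite R0 in H0.
    assert (k ^ nstar * hinner xA xA <= q ^ 2 * hinner xA xA)
      by (apply Rmult_le_compat_r; [apply hinner_pos | exact Hkn]).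
    assert (Eq : q ^ 2 * hinner xA xA = delta ^ 2 * ee).
    { unfold q, ee. rewrite <- !norm_sq. field. lra. }
    lra. }
  assert (HN : hnorm (hsub xA (xs nstar)) <= (sqrt c + delta) * hnorm eA).
  { unfold hnorm at 1. fold (R nstar).
    assert (Y0 : 0 <= (sqrt c + delta) * hnorm eA).
    { pose proof (sqrt_pos c). nra. }
    rewrite <- (sqrt_pow2 _ Y0). apply sqrt_le_1_alt.
    assert (ee = hnorm eA ^ 2) by (unfold ee; rewrite norm_sq; reflexivity).
    assert (sqrt c ^ 2 = c) by (apply pow2_sqrt; lra).
    pose proof (sqrt_pos c).
    assert ((delta ^ 2 + c) * ee <= ((sqrt c + delta) * hnorm eA) ^ 2).
    { rewrite H0. pose proof (norm_pos _ eA). 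
      assert (0 <= 2 * sqrt c * delta * hnorm eA ^ 2).
      { apply Rmult_le_pos; [nra | apply pow2_ge_0]. }
      replace (((sqrt c + delta) * hnorm eA) ^ 2) with
        ((sqrt c ^ 2 + delta ^ 2) * hnorm eA ^ 2 + 2 * sqrt c * delta * hnorm eA ^ 2) by ring.
      rewrite H1. lra. }
    lra. }
  pose proof (tri _ x xA (xs nstar)).
  rewrite (norm_subC _ x xA) in H0. lra.
Qed.
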